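(* Let $\mathfrak S$ be a commutative semiring. The set of all proper ideals, the set of all prime ideals, and the set of all strongly irreducible ideals of $\mathfrak S$, each endowed with the ideal topology, are sober spaces.
   Context: A semiring $(\mathfrak S,+,0,\cdot,1)$ has $(\mathfrak S,+,0)$ a commutative monoid, $(\mathfrak S,\cdot,1)$ a monoid, $0r=r0=0$, and two-sided distributivity; all semirings are commutative. An ideal is a nonempty proper subset closed under addition and under multiplication by elements of $\mathfrak S$. Prime: $ab\in\mathfrak p\Rightarrow a\in\mathfrak p$ or $b\in\mathfrak p$. Strongly irreducible: for ideals $\mathfrak a,\mathfrak b$, $\mathfrak a\cap\mathfrak b\subseteq\mathfrak s$ implies $\mathfrak a\subseteq\mathfrak s$ or $\mathfrak b\subseteq\mathfrak s$. For a set $\sigma_{\mathfrak S}$ of ideals and an ideal $\mathfrak a$, $\mathfrak a^{\uparrow}=\{\mathfrak x\in\sigma_{\mathfrak S}\mid\mathfrak a\subseteq\mathfrak x\}$; the ideal topology has these sets as a subbasis of closed sets. Sober: every non-empty irreducible closed subset is the closure of a unique point. *)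

(* Defs.v *)
(* commutative semirings are mathcomp's comPzSemiRingType
   (commutative monoid (+,0), multiplicative monoid with unit 1, 0 absorbing, distributivity,
   commutativity; the trivial semiring is allowed). *)
From mathcomp Require Import all_boot all_algebra.
From mathcomp Require Import classical_sets.
Set Implicit Arguments.
Unset Strict Implicit.
Unset Printing Implicit Defensive.
Import GRing.Theory.
Local Open Scope ring_scope.
Local Open Scope classical_set_scope.

Section Ideals.
Variable S : comPzSemiRingType.

Definition is_ideal (I : set S) : Prop :=
  [/\ (exists x, I x), (exists x, ~ I x),
      (forall x y, I x -> I y -> I (x + y)) &
      (forall r x, I x -> I (r * x))].

Definition is_prime (p : set S) : Prop :=
  is_ideal p /\ (forall a b, p (a * b) -> p a \/ p b).

Definition is_strongly_irreducible (s : set S) : Prop :=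
  is_ideal s /\
  (forall a b : set S, is_ideal a -> is_ideal b ->
     a `&` b `<=` s -> a `<=` s \/ b `<=` s).
End Ideals.

Section GenTop.
Variable X : Type.
Variable B : set (set X).

(* the least family containing B, the empty set and the whole space, closed
   under binary unions and arbitrary intersections: the closed sets of the
   topology having B as a subbasis of closed sets *)
Inductive gen_closed : set X -> Prop :=
  | gc_sub A : B A -> gen_closed A
  | gc_empty : gen_closed set0
  | gc_full : gen_closed setT
  | gc_union A1 A2 : gen_closed A1 -> gen_closed A2 -> gen_closed (A1 `|` A2)
  | gc_inter (F : set (set X)) :
      (forall A, F A -> gen_closed A) -> gen_closed (\bigcap_(A in F) A).

Definition gen_closure (A : set X) : set X :=
  \bigcap_(C in [set C | gen_closed C /\ A `<=` C]) C.

Definition gen_irreducible (C : set X) : Prop :=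
  C !=set0 /\
  (forall C1 C2, gen_closed C1 -> gen_closed C2 ->
     C `<=` C1 `|` C2 -> C `<=` C1 \/ C `<=` C2).

Definition gen_sober : Prop :=
  forall C, gen_closed C -> gen_irreducible C ->
    exists! x : X, C = gen_closure [set x].
End GenTop.

Section IdealTop.
Variable S : comPzSemiRingType.
Variable sigma : set (set S).

Definition ideal_space := {I : set S | sigma I}.

Definition up_set (a : set S) : set ideal_space :=
  [set x | a `<=` proj1_sig x].

Definition ideal_subbasis : set (set ideal_space) :=
  [set U | exists a : set S, is_ideal a /\ U = up_set a].

Definition ideal_topology_sober : Prop := gen_sober ideal_subbasis.
End IdealTop.

(* Main.v *)
Require Import Defs.
From mathcomp Require Import all_boot all_algebra.
From mathcomp Require Import classical_sets.
From mathcomp Require Import boolp.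
Import GRing.Theory.
Local Open Scope ring_scope.
Local Open Scope classical_set_scope.

Section Gen.
Variable S : comPzSemiRingType.
Variable sigma : set (set S).
Hypothesis sig_ideal : forall I, sigma I -> is_ideal I.

Local Notation X := (ideal_space sigma).
Local Notation closed := (gen_closed (@ideal_subbasis _ sigma)).

Definition meetC (C : set X) : set S := [set z | forall x, C x -> proj1_sig x z].

Lemma ideal0 (I : set S) : is_ideal I -> I 0.
Proof. by case=> [[x Ix] _ _ Hm]; rewrite -(mul0r x); apply: Hm. Qed.

Lemma closed_up (D : set X) : closed D ->
  forall x y : X, D x -> proj1_sig x `<=` proj1_sig y -> D y.
Proof.
elim=> {D}.
- move=> A [a [_ ->]] x y /= Hx Hxy; exact: (subset_trans Hx Hxy).
- by [].
- by [].
- move=> A1 A2 _ IH1 _ IH2 x y [H|H] Hxy; [left; exact: IH1 H Hxy|right; exact: IH2 H Hxy].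
- move=> F _ IH x y Hx Hxy A FA; exact: IH FA x y (Hx A FA) Hxy.
Qed.

Lemma key (C : set X) : gen_irreducible (@ideal_subbasis _ sigma) C ->
  forall D, closed D -> C `<=` D -> @up_set _ sigma (meetC C) `<=` D.
Proof.
move=> [[c Cc] Hirr] D; elim=> {D}.
- move=> A [a [_ ->]] HC x /= Hx z az; apply: Hx => y Cy; exact: HC y Cy z az.
- by move=> HC; have := HC c Cc.
- by [].
- move=> A1 A2 c1 IH1 c2 IH2 HC x Hx.
  case: (Hirr _ _ c1 c2 HC) => H; [left; exact: IH1 H x Hx|right; exact: IH2 H x Hx].
- move=> F _ IH HC x Hx A FA; apply: (IH A FA) => // y Cy; exact: HC y Cy A FA.
Qed.

Lemma meet_ideal (C : set X) : C !=set0 -> is_ideal (meetC C).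
Proof.
move=> [c Cc]; split.
- exists 0 => x _; apply: ideal0; apply: sig_ideal; exact: proj2_sig x.
- have [_ [z nz] _ _] := sig_ideal _ (proj2_sig c).
  exists z => H; apply: nz; exact: H c Cc.
- move=> a b Ha Hb x Cx; have [_ _ Hadd _] := sig_ideal _ (proj2_sig x).
  exact: Hadd (Ha x Cx) (Hb x Cx).
- move=> r a Ha x Cx; have [_ _ _ Hm] := sig_ideal _ (proj2_sig x).
  exact: Hm (Ha x Cx).
Qed.

Lemma closure_pt (x : X) : gen_closure (@ideal_subbasis _ sigma) [set x] = @up_set _ sigma (proj1_sig x).
Proof.
apply/seteqP; split.
- move=> y Hy; apply: Hy; split.
  + apply: gc_sub; exists (proj1_sig x); split => //; exact: sig_ideal _ (proj2_sig x).
  + by move=> t ->.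
- move=> y Hy D [cD HD]; exact: (@closed_up D cD x y (HD x erefl) Hy).
Qed.

Lemma sober_gen :
  (forall C : set X, closed C -> gen_irreducible (@ideal_subbasis _ sigma) C -> sigma (meetC C)) ->
  ideal_topology_sober sigma.
Proof.
move=> Hsig C cC irrC.
pose m : X := exist _ (meetC C) (Hsig C cC irrC).
have eqC : C = @up_set _ sigma (meetC C).
  apply/seteqP; split.
  - by move=> x Cx z Hz; exact: Hz x Cx.
  - exact: key irrC C cC (fun _ h => h).
exists m; split.
- by rewrite closure_pt eqC.
- move=> y; rewrite closure_pt eqC => Heq.
  have h1 : @up_set _ sigma (proj1_sig y) y by [].
  have h2 : @up_set _ sigma (meetC C) m by [].
  rewrite -Heq in h1; rewrite Heq in h2.
  have e : proj1_sig y = meetC C by apply/seteqP; split.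
  case: y e {Heq h1 h2} => y hy /= e; subst y; rewrite /m; congr exist; exact: Prop_irrelevance.
Qed.

End Gen.

Lemma V_closed (S : comPzSemiRingType) (sigma : set (set S))
  (sig_ideal : forall I, sigma I -> is_ideal I) (a : S) :
  gen_closed (@ideal_subbasis _ sigma) [set x : ideal_space sigma | proj1_sig x a].
Proof.
pose Sa := [set y : S | exists r, y = r * a].
case: (pselect (exists z, ~ Sa z)) => [Hp|Hn].
- have -> : [set x : ideal_space sigma | proj1_sig x a] = @up_set _ sigma Sa.
    apply/seteqP; split.
    + move=> x /= Hx y [r ->]; have [_ _ _ Hm] := sig_ideal _ (proj2_sig x); exact: Hm.
    + move=> x /= Hx; apply: Hx; exists 1; by rewrite mul1r.
  apply: gc_sub; exists Sa; split => //; split => //.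
  + by exists a, 1; rewrite mul1r.
  + by move=> _ _ [r ->] [s ->]; exists (r + s); rewrite mulrDl.
  + by move=> r _ [s ->]; exists (r * s); rewrite mulrA.
- have -> : [set x : ideal_space sigma | proj1_sig x a] = set0.
    apply/seteqP; split => // x /= Hx.
    have [_ [z nz] _ Hm] := sig_ideal _ (proj2_sig x).
    apply: nz; case: (pselect (Sa z)) => [[r ->]|nS]; first exact: Hm.
    by exfalso; apply: Hn; exists z.
  exact: gc_empty.
Qed.

Theorem corollary3p10 (S : comPzSemiRingType) :
  [/\ ideal_topology_sober (@is_ideal S),
      ideal_topology_sober (@is_prime S) &
      ideal_topology_sober (@is_strongly_irreducible S)].
Proof.
split.
- apply: sober_gen => // C _ irr; apply: meet_ideal => //; exact: irr.1.
- have si : forall I, @is_prime S I -> is_ideal I by move=> I [].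
  apply: sober_gen => // C _ irr; split; first by apply: meet_ideal => //; exact: irr.1.
  move=> a b Hab.
  have HC : C `<=` [set x | proj1_sig x a] `|` [set x | proj1_sig x b].
    move=> x Cx; have [_ Hp] := proj2_sig x; exact: Hp _ _ (Hab x Cx).
  case: (irr.2 _ _ (@V_closed S _ si a) (@V_closed S _ si b) HC) => H; [left|right] => x Cx; exact: H x Cx.
- have si : forall I, @is_strongly_irreducible S I -> is_ideal I by move=> I [].
  apply: sober_gen => // C _ irr; split; first by apply: meet_ideal => //; exact: irr.1.
  move=> a b Ia Ib Hab.
  have HC : C `<=` @up_set _ (@is_strongly_irreducible S) a `|` @up_set _ (@is_strongly_irreducible S) b.
    move=> x Cx; have [_ Hs] := proj2_sig x; apply: Hs => // z Hz; exact: Hab z Hz x Cx.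
  have ca : gen_closed (@ideal_subbasis _ (@is_strongly_irreducible S)) (@up_set _ (@is_strongly_irreducible S) a)
    by apply: gc_sub; exists a.
  have cb : gen_closed (@ideal_subbasis _ (@is_strongly_irreducible S)) (@up_set _ (@is_strongly_irreducible S) b)
    by apply: gc_sub; exists b.
  case: (irr.2 _ _ ca cb HC) => H; [left|right] => z Hz x Cx; exact: H x Cx z Hz.
Qed.
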